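(* Let $A$ be a T-brace and suppose that the torsion subgroup of the additive group of $\zeta(\star,A)$ is a $p$-group for some prime $p$. Suppose that the additive group of $\zeta_2(\star,A)$ is not periodic. If $a,b\in\zeta_2(\star,A)$ with $a\star a\neq 0$ and $b\star b\neq 0$, then $\langle a\star a\rangle\cap\langle b\star b\rangle\neq 0$, and in this case $\langle a\star a\rangle=\langle b\star b\rangle$. Here $\langle x\rangle$ denotes the cyclic subgroup of $(A,+)$ generated by $x$.
   Context: A (left) brace is a set $A$ with two operations $+$ and $\cdot$ such that $(A,+)$ is an abelian group, $(A,\cdot)$ is a group, and $a(b+c)=ab+ac-a$ for all $a,b,c\in A$. Put $a\star b=ab-a-b$. A subbrace is a subset which is a subgroup of both $(A,+)$ and $(A,\cdot)$; a subbrace $L$ is an ideal if $a\star z, z\star a\in L$ for all $a\in A$, $z\in L$, and then the quotient brace $A/L$ is defined. $A$ is a T-brace if whenever $I$ is an ideal of $J$ and $J$ is an ideal of $A$, then $I$ is an ideal of $A$. The $\star$-center is $\zeta(\star,A)=\{a: a\star x=x\star a=0\ \forall x\}$; $\zeta_2(\star,A)$ is given by $\zeta_2(\star,A)/\zeta(\star,A)=\zeta(\star,A/\zeta(\star,A))$. *)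

(* Defs.v *)
From mathcomp Require Import all_boot all_order all_algebra.
Set Implicit Arguments. Unset Strict Implicit. Unset Printing Implicit Defensive.
Import GRing.Theory.
Local Open Scope ring_scope.

Definition is_brace (A : zmodType) (mul : A -> A -> A) (one : A)
    (inv : A -> A) : Prop :=
  [/\ associative mul, left_id one mul, right_id one mul,
      (forall a, mul (inv a) a = one /\ mul a (inv a) = one)
    & (forall a b c, mul a (b + c) = mul a b + mul a c - a)].

Definition bstar (A : zmodType) (mul : A -> A -> A) (a b : A) : A :=
  mul a b - a - b.

Definition subbrace (A : zmodType) (mul : A -> A -> A) (one : A)
    (inv : A -> A) (L : A -> Prop) : Prop :=
  [/\ L 0, (forall x y, L x -> L y -> L (x - y)),
      L one, (forall x y, L x -> L y -> L (mul x y))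
    & (forall x, L x -> L (inv x))].

Definition ideal_of (A : zmodType) (mul : A -> A -> A) (one : A)
    (inv : A -> A) (J I : A -> Prop) : Prop :=
  [/\ subbrace mul one inv I, (forall x, I x -> J x)
    & (forall a z, J a -> I z -> I (bstar mul a z) /\ I (bstar mul z a))].

Definition ideal (A : zmodType) (mul : A -> A -> A) (one : A)
    (inv : A -> A) (I : A -> Prop) : Prop :=
  ideal_of mul one inv (fun _ => True) I.

Definition T_brace (A : zmodType) (mul : A -> A -> A) (one : A)
    (inv : A -> A) : Prop :=
  forall I J : A -> Prop,
    subbrace mul one inv J ->
    ideal_of mul one inv J I -> ideal mul one inv J -> ideal mul one inv I.

Definition star_center (A : zmodType) (mul : A -> A -> A) (a : A) : Prop :=
  forall x, bstar mul a x = 0 /\ bstar mul x a = 0.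

(* zeta_2(star, A): preimage of zeta(star, A/zeta(star,A)); since the star
   operation of the quotient is induced, this is the set of a with
   a * x, x * a in zeta(star,A) for all x. *)
Definition star_center2 (A : zmodType) (mul : A -> A -> A) (a : A) : Prop :=
  forall x, star_center mul (bstar mul a x) /\ star_center mul (bstar mul x a).

Definition cyc (A : zmodType) (x : A) (y : A) : Prop :=
  exists k : int, y = x *~ k.

Definition add_torsion (A : zmodType) (x : A) : Prop :=
  exists n : nat, (0 < n)%N /\ x *+ n = 0.

(* Main.v *)
Require Import Defs.
From mathcomp Require Import all_boot all_algebra.
From Stdlib Require Import Classical.
Set Implicit Arguments. Unset Strict Implicit. Unset Printing Implicit Defensive.
Import GRing.Theory.
Local Open Scope ring_scope.

Lemma gen_mulz (A : zmodType) (P : A -> Prop) (f : A -> A) :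
  P 0 -> (forall x y, P x -> P y -> P (x - y)) ->
  (forall x y, P x -> P y -> f (x - y) = f x - f y) ->
  forall c k, P c -> P (c *~ k) /\ f (c *~ k) = f c *~ k.
Proof.
move=> P0 PB fB.
have f0 : f 0 = 0 by have := fB 0 0 P0 P0; rewrite subrr => ->; rewrite subrr.
have PN x : P x -> P (- x) by move=> Px; rewrite -sub0r; apply: PB.
have fN x : P x -> f (- x) = - f x by move=> Px; rewrite -sub0r fB // f0 sub0r.
have PD x y : P x -> P y -> P (x + y) by move=> Px Py; rewrite -(opprK y); apply: PB => //; apply: PN.
have fD x y : P x -> P y -> f (x + y) = f x + f y.
  by move=> Px Py; rewrite -(opprK y) fB ?fN ?opprK //; apply: PN.
have Hn c n : P c -> P (c *+ n) /\ f (c *+ n) = f c *+ n.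
  move=> Pc; elim: n => [|n [IH1 IH2]]; first by rewrite !mulr0n.
  by rewrite !mulrS; split; [apply: PD | rewrite fD // IH2].
move=> c [n|n] Pc.
  by rewrite -!pmulrn; apply: Hn.
rewrite NegzE !mulrNz -!pmulrn; have [H1 H2] := Hn c n.+1 Pc.
by split; [apply: PN | rewrite fN // H2].
Qed.

Lemma bz_prime (A : zmodType) (p : nat) (z : A) (j : int) : prime p -> z *+ p = 0 ->
  (exists t : int, j = p%:Z * t) \/ exists al : int, z = (z *~ j) *~ al.
Proof.
move=> pp zp.
case cop: (coprime p `|j|).
  right. have [u [v huv]] := Bezoutz j p.
  have g1 : gcdz j p = 1.
    by rewrite /gcdz gcdnC; move/eqP: cop => ->.
  exists u.
  have -> : (z *~ j) *~ u = z *~ (u * j) by rewrite mulrC mulrzA.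
  have zp' : z *~ (v * p%:Z) = 0 by rewrite mulrC mulrzA -pmulrn zp mul0rz.
  by rewrite -[z in LHS]mulr1z -g1 -huv mulrzDr zp' addr0.
left. move: cop; rewrite prime_coprime // => /negbFE /dvdnP [t ht].
case: j ht => n /= ht.
  by exists t; rewrite ht PoszM mulrC.
by exists (- t%:Z); rewrite NegzE ht PoszM mulrN mulrC.
Qed.

Lemma mulz_abs (A : zmodType) (z : A) (j : int) : z *~ j = 0 -> z *+ `|j| = 0.
Proof.
case: j => n /=; first by rewrite -pmulrn.
by rewrite NegzE mulrNz -pmulrn => /eqP; rewrite oppr_eq0 => /eqP.
Qed.

Lemma tors_of (A : zmodType) (z : A) (j : int) : z *~ j = 0 -> j != 0 -> add_torsion z.
Proof. by move=> h hj; exists `|j|%N; split; [rewrite absz_gt0 | apply: mulz_abs]. Qed.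

Lemma ntors (A : zmodType) (z : A) (j : int) : ~ add_torsion z -> z *~ j = 0 -> j = 0.
Proof. by move=> nt h; apply/eqP; apply/negP => /negP hj; apply: nt; apply: (tors_of h hj). Qed.


Section Brace.
Variables (A : zmodType) (mul : A -> A -> A) (one : A) (inv : A -> A).
Hypothesis HB : is_brace mul one inv.
Local Notation st := (bstar mul).
Local Notation Zc := (star_center mul).
Local Notation Z2 := (star_center2 mul).

Lemma distr a b c : mul a (b + c) = mul a b + mul a c - a.
Proof. by case: HB. Qed.

Lemma mulx0 a : mul a 0 = a.
Proof.
have h := distr a 0 0; rewrite addr0 in h.
move/eqP: h; rewrite eq_sym subr_eq => /eqP h.
exact: (addrI _ h).
Qed.

Lemma one0 : one = 0.
Proof. by case: HB => _ h _ _ _; rewrite -(mulx0 one) h. Qed.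

Lemma mul0x a : mul 0 a = a.
Proof. by case: HB => _ h _ _ _; rewrite -one0 h. Qed.

Lemma mulVx a : mul (inv a) a = 0.
Proof. by case: HB => _ _ _ h _; rewrite -one0; case: (h a). Qed.

Lemma mulxV a : mul a (inv a) = 0.
Proof. by case: HB => _ _ _ h _; rewrite -one0; case: (h a). Qed.

Lemma mulA : associative mul.
Proof. by case: HB. Qed.

Lemma mulE x y : mul x y = x + y + st x y.
Proof. by rewrite /bstar -[mul x y - x - y]addrA -opprD [RHS]addrC subrK. Qed.

Lemma stD x y z : st x (y + z) = st x y + st x z.
Proof.
rewrite /bstar distr opprD [RHS]addrACA.
rewrite [X in _ = X + _]addrACA -[in RHS](addrA (mul x y + mul x z)).
by rewrite !addrA.
Qed.


Lemma stB x y z : st x (y - z) = st x y - st x z.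
Proof. by rewrite -[in RHS](subrK z y) stD addrK. Qed.

Lemma stx0 x : st x 0 = 0.
Proof. by have h := stB x 0 0; rewrite subr0 subrr in h. Qed.

Lemma st0x x : st 0 x = 0.
Proof. by rewrite /bstar mul0x subr0 subrr. Qed.

Lemma stMz x c k : st x (c *~ k) = st x c *~ k.
Proof.
have := (gen_mulz (P := fun _ => True) (f := st x) I (fun _ _ _ _ => I)
          (fun a b _ _ => stB x a b) (c := c) k I). by case.
Qed.

Lemma stN x y : st x (- y) = - st x y.
Proof. by rewrite -sub0r stB stx0 sub0r. Qed.

Lemma stG u y x : st (mul u y) x = st u x + st u (st y x) + st y x.
Proof.
have e1 : mul (mul u y) x = u + y + st u y + x + st (mul u y) x.
  by rewrite mulE [mul u y]mulE.
have e2 : mul u (mul y x) = u + (y + x + st y x) + (st u y + st u x + st u (st y x)).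
  by rewrite mulE [mul y x]mulE !stD.
apply: (addrI (u + y + st u y + x)).
rewrite -e1 -mulA e2.
set s1 := st u (st y x); set s2 := st u x; set s3 := st u y; set s4 := st y x.
clearbody s1 s2 s3 s4; rewrite !addrA.
by rewrite [LHS](ACl (1*2*5*3*6*7*4)).
Qed.

Lemma Zc0 : Zc 0.
Proof. by move=> x; rewrite st0x stx0. Qed.

Lemma ZcH y w x : Zc w -> st (y + w) x = st y x.
Proof.
move=> Hw.
have -> : y + w = mul y w by rewrite mulE (proj2 (Hw y)) addr0.
by rewrite stG (proj1 (Hw x)) stx0 !addr0.
Qed.

Lemma ZcD z z' : Zc z -> Zc z' -> Zc (z + z').
Proof.
move=> Hz Hz' x; split; first by rewrite ZcH // (proj1 (Hz x)).
by rewrite stD (proj2 (Hz x)) (proj2 (Hz' x)) addr0.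
Qed.

Lemma ZcN z : Zc z -> Zc (- z).
Proof.
move=> Hz x; split; last by rewrite stN (proj2 (Hz x)) oppr0.
by rewrite -(ZcH (- z) x Hz) addNr st0x.
Qed.

Lemma ZcB z z' : Zc z -> Zc z' -> Zc (z - z').
Proof. by move=> Hz Hz'; apply: ZcD => //; apply: ZcN. Qed.

Lemma ZcMz z k : Zc z -> Zc (z *~ k).
Proof.
move=> Hz.
exact: (proj1 (gen_mulz (P := Zc) (f := id) Zc0 ZcB (fun a b _ _ => erefl) (c := z) k Hz)).
Qed.

Lemma ZZ2 z : Zc z -> Z2 z.
Proof. by move=> Hz x; rewrite (proj1 (Hz x)) (proj2 (Hz x)); split; apply: Zc0. Qed.

Lemma stK u v x : Zc (st u v) -> Zc (st v x) -> st (u + v) x = st u x + st v x.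
Proof.
move=> H1 H2.
have -> : u + v = mul u v + (- st u v) by rewrite mulE addrK.
by rewrite ZcH ?stG ?(proj2 (H2 u)) ?addr0 //; apply: ZcN.
Qed.

Lemma INV c : Zc (st c (inv c)) -> inv c = - c + st c c.
Proof.
move=> Hw.
have h1 : inv c = - c - st c (inv c).
  move: (mulxV c); rewrite mulE; move: (st c (inv c)) => w h.
  by rewrite -[inv c](addKr c) -(addrK w (c + inv c)) h sub0r.
have h2 : st c (inv c) = - st c c.
  by rewrite {1}h1 stB stN (proj2 (Hw c)) subr0.
by rewrite {1}h1 h2 opprK.
Qed.

Lemma stNl c x : Z2 c -> st (- c) x = - st c x.
Proof.
move=> Hc.
have Hq : Zc (st c c) := proj1 (Hc c).
have -> : - c = inv c + (- st c c) by rewrite INV ?addrK //; exact: (proj1 (Hc (inv c))).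
rewrite ZcH; last exact: ZcN.
have h := stG (inv c) c x.
rewrite mulVx st0x (proj2 (proj1 (Hc x) (inv c))) addr0 in h.
by move/eqP: h; rewrite eq_sym addr_eq0 => /eqP.
Qed.

Lemma Z2N c : Z2 c -> Z2 (- c).
Proof.
move=> Hc x; rewrite stNl // stN; split; apply: ZcN; [exact: (proj1 (Hc x)) | exact: (proj2 (Hc x))].
Qed.

Lemma stDl u v x : Z2 u -> Z2 v -> st (u + v) x = st u x + st v x.
Proof. by move=> Hu Hv; apply: stK; [exact: (proj1 (Hu v)) | exact: (proj1 (Hv x))]. Qed.

Lemma Z2D u v : Z2 u -> Z2 v -> Z2 (u + v).
Proof.
move=> Hu Hv x; rewrite stDl // stD; split; apply: ZcD;
  by [exact: (proj1 (Hu x)) | exact: (proj1 (Hv x)) | exact: (proj2 (Hu x)) | exact: (proj2 (Hv x))].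
Qed.

Lemma stBl u v x : Z2 u -> Z2 v -> st (u - v) x = st u x - st v x.
Proof. by move=> Hu Hv; rewrite stDl ?stNl //; apply: Z2N. Qed.

Lemma Z2B u v : Z2 u -> Z2 v -> Z2 (u - v).
Proof. by move=> Hu Hv; apply: Z2D => //; apply: Z2N. Qed.

Lemma Z20 : Z2 0.
Proof. exact: (ZZ2 Zc0). Qed.

Lemma Z2Mz c k : Z2 c -> Z2 (c *~ k) /\ forall x, st (c *~ k) x = st c x *~ k.
Proof.
move=> Hc; split; first exact: (proj1 (gen_mulz (P := Z2) (f := id) Z20 Z2B (fun a b _ _ => erefl) (c := c) k Hc)).
move=> x.
exact: (proj2 (gen_mulz (P := Z2) (f := fun y => st y x) Z20 Z2B (fun a b Ha Hb => stBl x Ha Hb) (c := c) k Hc)).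
Qed.

Section SW.
Variables (c : A) (W : A -> Prop).
Hypotheses (Hc : Z2 c) (W0 : W 0) (WB : forall x y, W x -> W y -> W (x - y))
  (WZ : forall w, W w -> Zc w) (Wq : W (st c c)).

Definition SW y := exists k w, W w /\ y = c *~ k + w.

Lemma WMz w k : W w -> W (w *~ k).
Proof. by move=> Hw; exact: (proj1 (gen_mulz (P := W) (f := id) W0 WB (fun a b _ _ => erefl) (c := w) k Hw)). Qed.

Lemma WD x y : W x -> W y -> W (x + y).
Proof. move=> Hx Hy; have -> : x + y = x - (0 - y) by rewrite sub0r opprK. by apply: WB => //; apply: WB. Qed.

Lemma SW_stl k w x : W w -> st (c *~ k + w) x = st c x *~ k.
Proof. by move=> Hw; rewrite ZcH ?(proj2 (Z2Mz k Hc)) //; apply: WZ. Qed.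

Lemma SW_str k w x : W w -> st x (c *~ k + w) = st x c *~ k.
Proof. by move=> Hw; rewrite stD stMz (proj2 (WZ Hw x)) addr0. Qed.

Lemma SW_Z2 y : SW y -> Z2 y.
Proof.
case=> k [w [Hw ->]]; apply: Z2D; first exact: (proj1 (Z2Mz k Hc)).
by apply: ZZ2; apply: WZ.
Qed.

Lemma SW_stq y x : SW y -> SW x -> W (st y x).
Proof.
case=> k [w [Hw ->]] [k' [w' [Hw' ->]]].
by rewrite SW_stl // SW_str //; apply: WMz; apply: WMz.
Qed.

Lemma SW_sub : subbrace mul one inv SW.
Proof.
split.
- by exists 0, 0; split => //; rewrite mulr0z addr0.
- move=> x y [k [w [Hw ->]]] [k' [w' [Hw' ->]]].
  exists (k - k'), (w - w'); split; first exact: WB.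
  by rewrite mulrzBr opprD addrACA.
- by rewrite one0; exists 0, 0; split => //; rewrite mulr0z addr0.
- move=> x y Hx Hy; have Hxy := SW_stq Hx Hy.
  move: Hx Hy Hxy => [k [w [Hw ->]]] [k' [w' [Hw' ->]]] Hxy.
  rewrite mulE; exists (k + k'), (w + w' + st (c *~ k + w) (c *~ k' + w')).
  split; first by apply: WD => //; apply: WD.
  rewrite mulrzDr; move: (st (c *~ k + w) (c *~ k' + w')) => s0; by rewrite addrACA [RHS]addrA.
- move=> x Hx; have Hxx := SW_stq Hx Hx; have Z2x := SW_Z2 Hx.
  rewrite INV; last exact: (proj1 (Z2x (inv x))).
  move: Hx Hxx => [k [w [Hw ->]]] Hxx.
  exists (- k), (- w + st (c *~ k + w) (c *~ k + w)); split.
    by apply: WD => //; rewrite -sub0r; apply: WB.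
  move: (st _ _) => s0; by rewrite opprD mulrNz [RHS]addrA.
Qed.

End SW.

Lemma TC (HT : T_brace mul one inv) c : Z2 c -> forall x,
  (exists k m, st x c = c *~ k + st c c *~ m) /\ (exists k m, st c x = c *~ k + st c c *~ m).
Proof.
move=> Hc x.
set q := st c c.
have Zq : Zc q := proj1 (Hc c).
pose Wq := fun w => exists m, w = q *~ m.
have Wq0 : Wq 0 by exists 0; rewrite mulr0z.
have WqB : forall x y, Wq x -> Wq y -> Wq (x - y).
  by move=> ? ? [m ->] [m' ->]; exists (m - m'); rewrite mulrzBr.
have WqZ : forall w, Wq w -> Zc w by move=> ? [m ->]; apply: ZcMz.
have Wqq : Wq q by exists 1; rewrite mulr1z.
have WZ0 : Zc 0 := Zc0.
have WZB : forall x y, Zc x -> Zc y -> Zc (x - y) := ZcB.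
have WZZ : forall w, Zc w -> Zc w by [].
have HJ := SW_sub Hc WZ0 WZB WZZ Zq.
have HI := SW_sub Hc Wq0 WqB WqZ Wqq.
have HIJ : ideal_of mul one inv (SW c Zc) (SW c Wq).
  split => //.
    by move=> y [k [w [Hw ->]]]; exists k, w; split => //; apply: WqZ.
  move=> a z Ha Hz; split.
  - exists 0, (st a z); rewrite mulr0z add0r; split => //.
    case: Ha => k [w [Hw ->]]; case: Hz => k' [w' [Hw' ->]].
    by rewrite (@SW_stl c Zc Hc WZZ) // (@SW_str c Wq WqZ) //; apply: (WMz Wq0 WqB); apply: (WMz Wq0 WqB).
  - exists 0, (st z a); rewrite mulr0z add0r; split => //.
    case: Ha => k [w [Hw ->]]; case: Hz => k' [w' [Hw' ->]].
    by rewrite (@SW_stl c Wq Hc WqZ) // (@SW_str c Zc WZZ) //; apply: (WMz Wq0 WqB); apply: (WMz Wq0 WqB).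
have HJA : ideal mul one inv (SW c Zc).
  split => // a z _ [k [w [Hw ->]]]; split.
  - exists 0, (st a (c *~ k + w)); rewrite mulr0z add0r; split => //.
    by rewrite (@SW_str c Zc WZZ) //; apply: ZcMz; exact: (proj2 (Hc a)).
  - exists 0, (st (c *~ k + w) a); rewrite mulr0z add0r; split => //.
    by rewrite (@SW_stl c Zc Hc WZZ) //; apply: ZcMz; exact: (proj1 (Hc a)).
have [_ _ H] := HT (SW c Wq) (SW c Zc) HJ HIJ HJA.
have Ic : SW c Wq c by exists 1, 0; split => //; rewrite mulr1z addr0.
have [[k [w [[m ->] E1]]] [k' [w' [[m' ->] E2]]]] := H x c I Ic.
by split; [exists k, m | exists k', m'].
Qed.

End Brace.


Section Main.
Variables (A : zmodType) (mul : A -> A -> A) (one : A) (inv : A -> A) (p : nat).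
Hypothesis HB : is_brace mul one inv.
Hypothesis HT : T_brace mul one inv.
Hypothesis pp : prime p.
Hypothesis Htor : forall z, star_center mul z -> add_torsion z ->
     exists k : nat, z *+ (p ^ k) = 0.
Local Notation st := (bstar mul).
Local Notation Zc := (star_center mul).
Local Notation Z2 := (star_center2 mul).

Definition inS c := forall x, cyc (st c c) (st x c) /\ cyc (st c c) (st c x).
Definition infZ c := forall k, Zc (c *~ k) -> c *~ k = 0.

Lemma caseA c : Z2 c -> infZ c -> inS c.
Proof.
move=> Hc Hi x; have [[k [m E1]] [k' [m' E2]]] := TC HB HT Hc x.
have Zq : Zc (st c c) := proj1 (Hc c).
split.
- exists m; have h : c *~ k = st x c - st c c *~ m by rewrite E1 addrK.
  rewrite Hi in E1; first by rewrite E1 add0r.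
  by rewrite h; apply: (ZcB HB); [exact: (proj2 (Hc x)) | apply: (ZcMz HB)].
- exists m'; have h : c *~ k' = st c x - st c c *~ m' by rewrite E2 addrK.
  rewrite Hi in E2; first by rewrite E2 add0r.
  by rewrite h; apply: (ZcB HB); [exact: (proj1 (Hc x)) | apply: (ZcMz HB)].
Qed.

Lemma caseO c : Z2 c -> inS (c *~ p) -> st c c *+ p = 0.
Proof.
move=> Hc Hp.
have [Z2p stp] := Z2Mz HB p Hc.
have [m Em] := proj1 (Hp c).
set z := st c c *~ p.
have e1 : st c (c *~ p) = z by rewrite (stMz HB).
have e2 : st (c *~ p) (c *~ p) = z *~ p by rewrite stp e1.
have Ez : z = z *~ (p%:Z * m) by rewrite mulrzA -e2 -Em e1.
have Zz : Zc z by apply: (ZcMz HB); exact: (proj1 (Hc c)).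
have pg1 : (1 < p)%N := prime_gt1 pp.
have tz : add_torsion z.
  apply: (@tors_of _ z (1 - p%:Z * m)).
    by rewrite mulrzBr mulr1z -Ez subrr.
  apply/eqP => h.
  have : (p%:Z * m = 1) by apply/eqP; rewrite eq_sym -subr_eq0 h.
  move=> /(congr1 (fun t : int => `|t|%N)); rewrite abszM /= => /eqP.
  rewrite muln_eq1 => /andP [/eqP hp _]; by rewrite hp in pg1.
have [k hk] := Htor Zz tz.
have iter : forall j, z = z *~ ((p%:Z * m) ^+ j).
  elim=> [|j IH]; first by rewrite expr0 mulr1z.
  by rewrite exprSr mulrzA -IH.
rewrite pmulrn -/z (iter k) exprMn mulrzA.
by rewrite -[p%:Z]natz -natrX natz -pmulrn hk mul0rz.
Qed.

Lemma cyc_p (q y : A) : q *+ p = 0 -> cyc q y -> y *~ p = 0.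
Proof. by move=> hq [m ->]; rewrite -mulrzA mulrC mulrzA -pmulrn hq mul0rz. Qed.

Lemma stRw x c w : Zc w -> st x (c + w) = st x c.
Proof. by move=> Hw; rewrite (stD HB) (proj2 (Hw x)) addr0. Qed.

Lemma int_ne0 (c : A) (n : int) : c *~ n <> 0 -> n != 0.
Proof. by move=> h; apply/eqP => hn; apply: h; rewrite hn mulr0z. Qed.

Variable d : A.
Hypotheses (Hd : Z2 d) (Hnd : ~ add_torsion d).

Lemma caseI c (n : int) : Z2 c -> Zc (c *~ n) -> c *~ n <> 0 -> infZ d -> inS c.
Proof.
move=> Hc Hn Hn0 Hi.
have Sd := caseA Hd Hi.
have Z2dp := proj1 (Z2Mz HB p Hd).
have infdp : infZ (d *~ p).
  by move=> k hk; rewrite -mulrzA; apply: Hi; rewrite mulrzA.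
have qd : st d d *+ p = 0 := caseO Hd (caseA Z2dp infdp).
set c' := c + d *~ p.
have Z2c' : Z2 c' := Z2D HB Hc Z2dp.
have n0 := int_ne0 Hn0.
have p0 : p%:Z != 0 by rewrite eqz_nat -lt0n prime_gt0.
have infc' : infZ c'.
  move=> k hk.
  have h1 : Zc (c' *~ k *~ n) by apply: (ZcMz HB).
  have h2 : Zc (c *~ n *~ k) by apply: (ZcMz HB).
  have e : d *~ (p%:Z * k * n) = c' *~ k *~ n - c *~ n *~ k.
    rewrite /c' !mulrzDl -!mulrzA [k * n]mulrC addrC addKr -mulrA [n * k]mulrC.
    by rewrite mulrA.
  have hd : d *~ (p%:Z * k * n) = 0 by apply: Hi; rewrite e; apply: (ZcB HB).
  have := ntors Hnd hd => /eqP; rewrite !mulf_eq0 (negbTE p0) (negbTE n0) orbF /= => /eqP ->.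
  by rewrite mulr0z.
have Sc' := caseA Z2c' infc'.
have E1 x : st x c' = st x c.
  by rewrite /c' (stD HB) (stMz HB) (cyc_p qd (proj1 (Sd x))) addr0.
have E2 x : st c' x = st c x.
  by rewrite /c' (stDl HB) // (proj2 (Z2Mz HB p Hd)) (cyc_p qd (proj2 (Sd x))) addr0.
have Eq : st c' c' = st c c by rewrite E2 E1.
move=> x; have [h3 h4] := Sc' x.
by rewrite Eq E1 in h3; rewrite Eq E2 in h4.
Qed.


Lemma alg (c e q s : A) (n k1 m1 k2 m2 : int) : ~ add_torsion e ->
  s *~ n = 0 -> n != 0 -> q *~ n = 0 ->
  s = (c + e) *~ k1 + q *~ m1 -> s = (c + e *~ 2) *~ k2 + q *~ m2 -> cyc q s.
Proof.
move=> He sn n0 qn E1 E2.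
have h1 : (c + e) *~ (k1 * n) = 0.
  by rewrite mulrzA -[(c + e) *~ k1](addrK (q *~ m1)) -E1 mulrzBl sn -mulrzA mulrC mulrzA qn mul0rz subrr.
have h2 : (c + e *~ 2) *~ (k2 * n) = 0.
  by rewrite mulrzA -[(c + e *~ 2) *~ k2](addrK (q *~ m2)) -E2 mulrzBl sn -mulrzA mulrC mulrzA qn mul0rz subrr.
case: (eqVneq k1 0) => [k10 | k10]; first by exists m1; rewrite E1 k10 mulr0z add0r.
case: (eqVneq k2 0) => [k20 | k20]; first by exists m2; rewrite E2 k20 mulr0z add0r.
have : e *~ (k1 * n * (k2 * n)) = 0.
  have -> : e = (c + e *~ 2) - (c + e) by rewrite opprD addrACA subrr add0r -pmulrn mulr2n addrK.
  by rewrite mulrzBl [in X in X - _](mulrC (k1 * n)) (mulrzA (c + e *~ 2)) (mulrzA (c + e)) h2 h1 !mul0rz subrr.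
move/(ntors He)/eqP; rewrite !mulf_eq0 (negbTE k10) (negbTE k20) (negbTE n0) //.
Qed.

Lemma caseII c (n : int) (e : A) : Z2 c -> Zc (c *~ n) -> c *~ n <> 0 ->
  Zc e -> ~ add_torsion e -> inS c.
Proof.
move=> Hc Hn Hn0 He Hne x.
have n0 := int_ne0 Hn0.
have He2 : Zc (e *~ 2) := ZcMz HB 2 He.
have Z2ce : Z2 (c + e) := Z2D HB Hc (ZZ2 HB He).
have Z2ce2 : Z2 (c + e *~ 2) := Z2D HB Hc (ZZ2 HB He2).
have [[k1 [m1 E1]] [k1' [m1' E1']]] := TC HB HT Z2ce x.
have [[k2 [m2 E2]] [k2' [m2' E2']]] := TC HB HT Z2ce2 x.
have q1 : st (c + e) (c + e) = st c c by rewrite stRw // (ZcH HB).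
have q2 : st (c + e *~ 2) (c + e *~ 2) = st c c by rewrite stRw // (ZcH HB).
rewrite q1 stRw // in E1; rewrite q1 (ZcH HB) // in E1'.
rewrite q2 stRw // in E2; rewrite q2 (ZcH HB) // in E2'.
have qn : st c c *~ n = 0 by rewrite -(stMz HB) (proj2 (Hn c)).
have sn1 : st x c *~ n = 0 by rewrite -(stMz HB) (proj2 (Hn x)).
have sn2 : st c x *~ n = 0 by rewrite -(proj2 (Z2Mz HB n Hc)) (proj1 (Hn x)).
split; [exact: (alg Hne sn1 n0 qn E1 E2) | exact: (alg Hne sn2 n0 qn E1' E2')].
Qed.

Lemma notinf c : ~ infZ c -> exists k, Zc (c *~ k) /\ c *~ k <> 0.
Proof.
move=> Hni; apply: NNPP => hne; apply: Hni => k hk; apply: NNPP => hk0.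
by apply: hne; exists k.
Qed.

Lemma star c : Z2 c -> inS c.
Proof.
move=> Hc.
case: (classic (infZ c)) => [Hi | /notinf [n [Hn Hn0]]]; first exact: caseA.
case: (classic (infZ d)) => [Hi | /notinf [n' [Hn' Hn0']]]; first exact: (caseI Hc Hn Hn0 Hi).
apply: (caseII Hc Hn Hn0 Hn') => [[N [N0 hN]]].
have n0' := int_ne0 Hn0'.
have : d *~ (n' * N%:Z) = 0 by rewrite mulrzA -pmulrn hN.
move/(ntors Hnd)/eqP; rewrite mulf_eq0 (negbTE n0') /= eqz_nat => /eqP hN0.
by rewrite hN0 in N0.
Qed.

Lemma pq c : Z2 c -> st c c *+ p = 0.
Proof. by move=> Hc; apply: (caseO Hc); apply: star; exact: (proj1 (Z2Mz HB p Hc)). Qed.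

Lemma qin a b : Z2 a -> Z2 b -> st a a <> 0 -> cyc (st a a) (st b b).
Proof.
move=> Ha Hb qa0.
have Sa := star Ha; have Sb := star Hb.
have pb := pq Hb.
have [i Ei] := proj2 (Sa b).
have [j Ej] := proj1 (Sb a).
case: (bz_prime j pp pb) => [[t Et] | [al Eal]]; last first.
  by exists (i * al); rewrite Eal -Ej Ei mulrzA.
have u0 : st a b = 0 by rewrite Ej Et mulrzA -pmulrn pb mul0rz.
have [i' Ei'] := proj1 (Sa b).
have [j' Ej'] := proj2 (Sb a).
case: (bz_prime j' pp pb) => [[t' Et'] | [al Eal]]; last first.
  by exists (i' * al); rewrite Eal -Ej' Ei' mulrzA.
have v0 : st b a = 0 by rewrite Ej' Et' mulrzA -pmulrn pb mul0rz.
have Hab := Z2D HB Ha Hb.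
have [m Em] := proj1 (star Hab a).
have qab : st (a + b) (a + b) = st a a + st b b.
  by rewrite (stDl HB) // !(stD HB) u0 v0 addr0 add0r.
have Eqa : st a (a + b) = st a a by rewrite (stD HB) u0 addr0.
rewrite qab Eqa in Em.
case: (bz_prime m pp pb) => [[t2 Et2] | [al Eal]].
  exfalso; apply: qa0.
  have pa := pq Ha.
  by rewrite Em mulrzDl Et2 !mulrzA -!pmulrn pa pb !mul0rz addr0.
exists ((1 - m) * al); rewrite mulrzA Eal.
congr (_ *~ _).
by rewrite mulrzBr mulr1z {1}Em mulrzDl addrAC subrr add0r.
Qed.

End Main.

Unset Implicit Arguments.

Theorem lemma4p7 (A : zmodType) (mul : A -> A -> A) (one : A)
    (inv : A -> A) (p : nat) :
  is_brace mul one inv ->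
  T_brace mul one inv ->
  prime p ->
  (forall z, star_center mul z -> add_torsion z ->
     exists k : nat, z *+ (p ^ k) = 0) ->
  (exists a, star_center2 mul a /\ ~ add_torsion a) ->
  forall a b : A, star_center2 mul a -> star_center2 mul b ->
  bstar mul a a <> 0 -> bstar mul b b <> 0 ->
  (exists y, y <> 0 /\ cyc (bstar mul a a) y /\ cyc (bstar mul b b) y) /\
  (forall y, cyc (bstar mul a a) y <-> cyc (bstar mul b b) y).
Proof.
move=> HB HT pp Htor [d [Hd Hnd]] a b Ha Hb qa qb.
have ab := qin HB HT pp Htor Hd Hnd Ha Hb qa.
have ba := qin HB HT pp Htor Hd Hnd Hb Ha qb.
have trans : forall x y z : A, cyc x y -> cyc y z -> cyc x z.
  by move=> x y z [k ->] [l ->]; exists (k * l); rewrite mulrzA.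
split.
  exists (bstar mul a a); split => //; split; last exact: ba.
  by exists 1; rewrite mulr1z.
by move=> y; split => h; [apply: trans ba h | apply: trans ab h].
Qed.
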